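(* Let $\mathcal{X}$ be a feature space, $p(\boldsymbol{x},y)$ a joint density on $\mathcal{X}\times\{+1,-1\}$ with class priors $\pi_+=p(y=+1)\in(0,1)$, $\pi_-=1-\pi_+$ and class-conditional densities $p_+,p_-$. Let $\ell:\mathbb{R}\times\{+1,-1\}\to\mathbb{R}_+$ be a loss function and $f:\mathcal{X}\to\mathbb{R}$ a classifier with classification risk $$R(f)=\mathbb{E}_{p(\boldsymbol{x},y)}[\ell(f(\boldsymbol{x}),y)]=\pi_+\mathbb{E}_{p_+(\boldsymbol{x})}[\ell(f(\boldsymbol{x}),+1)]+\pi_-\mathbb{E}_{p_-(\boldsymbol{x})}[\ell(f(\boldsymbol{x}),-1)].$$ Define $$\widetilde{p}_+(\boldsymbol{x})=\frac{\pi_+}{\pi_-^2+\pi_+}p_+(\boldsymbol{x})+\frac{\pi_-^2}{\pi_-^2+\pi_+}p_-(\boldsymbol{x}),\qquad \widetilde{p}_-(\boldsymbol{x})=\frac{\pi_+^2}{\pi_+^2+\pi_-}p_+(\boldsymbol{x})+\frac{\pi_-}{\pi_+^2+\pi_-}p_-(\boldsymbol{x}).$$ Then $R(f)=R_{\mathrm{PC}}(f)$, where $$R_{\mathrm{PC}}(f)=\mathbb{E}_{\widetilde{p}_+(\boldsymbol{x})}\big[\ell(f(\boldsymbol{x}),+1)-\pi_+\ell(f(\boldsymbol{x}),-1)\big]+\mathbb{E}_{\widetilde{p}_-(\boldsymbol{x}')}\big[\ell(f(\boldsymbol{x}'),-1)-\pi_-\ell(f(\boldsymbol{x}'),+1)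\big].$$
   Context: $\widetilde{p}_+$ and $\widetilde{p}_-$ are the marginal densities of the first and second components of pairwise comparison data, i.e. pairs $(\boldsymbol{x},\boldsymbol{x}')$ of unlabeled points generated by drawing two labeled points independently from $p(\boldsymbol{x},y)$ and conditioning on their labels lying in $\{(+1,+1),(+1,-1),(-1,-1)\}$. *)

(* Defs.v *)
From HB Require Import structures.
From mathcomp Require Import all_boot all_order all_algebra.
From mathcomp Require Import all_classical all_reals all_analysis.
Set Implicit Arguments. Unset Strict Implicit. Unset Printing Implicit Defensive.
Import Order.TTheory GRing.Theory Num.Theory.
Local Open Scope ring_scope.
Local Open Scope classical_set_scope.

(* Labels: [true] stands for y = +1, [false] for y = -1. *)

Section Defs.
Context {d : measure_display} {T : measurableType d} {R : realType}.
Variable mu : {measure set T -> \bar R}.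

Definition is_density (p : T -> R) : Prop :=
  [/\ (forall x, 0 <= p x), measurable_fun setT p &
      (\int[mu]_x (p x)%:E = 1)%E].

Definition expect (p : T -> R) (g : T -> R) : \bar R :=
  (\int[mu]_x (g x * p x)%:E)%E.

Definition risk (pip : R) (pp pm : T -> R) (l : R -> bool -> R) (f : T -> R)
  : \bar R :=
  ((pip%:E) * expect pp (fun x => l (f x) true)
   + ((1 - pip)%R)%:E * expect pm (fun x => l (f x) false))%E.

(* marginal densities of pairwise comparison data *)
Definition ptilde_plus (pip : R) (pp pm : T -> R) (x : T) : R :=
  let pim := 1 - pip in
  pip / (pim ^+ 2 + pip) * pp x + pim ^+ 2 / (pim ^+ 2 + pip) * pm x.

Definition ptilde_minus (pip : R) (pp pm : T -> R) (x : T) : R :=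
  let pim := 1 - pip in
  pip ^+ 2 / (pip ^+ 2 + pim) * pp x + pim / (pip ^+ 2 + pim) * pm x.

Definition risk_PC (pip : R) (pp pm : T -> R) (l : R -> bool -> R)
  (f : T -> R) : \bar R :=
  (expect (ptilde_plus pip pp pm)
     (fun x => (l (f x) true - pip * l (f x) false)%R)
   + expect (ptilde_minus pip pp pm)
     (fun x => (l (f x) false - (1 - pip) * l (f x) true)%R))%E.

End Defs.

(* Main.v *)
Require Import Defs.
From HB Require Import structures.
From mathcomp Require Import all_boot all_order all_algebra.
From mathcomp Require Import all_classical all_reals all_analysis.
From mathcomp Require Import ring lra.
Import Order.TTheory GRing.Theory Num.Theory.
Local Open Scope ring_scope.
Local Open Scope classical_set_scope.

Lemma lin4 (d : measure_display) (T : measurableType d) (R : realType)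
  (mu : {measure set T -> \bar R}) (g1 g2 g3 g4 : T -> R) (a1 a2 a3 a4 : R) :
  mu.-integrable setT (fun x => (g1 x)%:E) ->
  mu.-integrable setT (fun x => (g2 x)%:E) ->
  mu.-integrable setT (fun x => (g3 x)%:E) ->
  mu.-integrable setT (fun x => (g4 x)%:E) ->
  (\int[mu]_x (a1 * g1 x + a2 * g2 x + a3 * g3 x + a4 * g4 x)%:E =
   a1%:E * \int[mu]_x (g1 x)%:E + a2%:E * \int[mu]_x (g2 x)%:E
   + a3%:E * \int[mu]_x (g3 x)%:E + a4%:E * \int[mu]_x (g4 x)%:E)%E.
Proof.
move=> i1 i2 i3 i4.
transitivity (\int[mu]_x ((a1%:E * (g1 x)%:E + a2%:E * (g2 x)%:E
   + a3%:E * (g3 x)%:E) + a4%:E * (g4 x)%:E))%E.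
  by apply: eq_integral => x _; rewrite !EFinD !EFinM.
have j1 := integrableZl measurableT a1 i1.
have j2 := integrableZl measurableT a2 i2.
have j3 := integrableZl measurableT a3 i3.
have j4 := integrableZl measurableT a4 i4.
rewrite integralD //; last by apply: integrableD => //; apply: integrableD.
rewrite integralD //; last by apply: integrableD.
rewrite integralD //.
by rewrite !integralZl.
Qed.

Theorem theorem3 (d : measure_display) (T : measurableType d) (R : realType)
  (mu : {measure set T -> \bar R}) (pip : R) (pp pm : T -> R)
  (l : R -> bool -> R) (f : T -> R) :
  0 < pip < 1 ->
  is_density mu pp -> is_density mu pm ->
  (forall z y, 0 <= l z y) ->
  (forall y, measurable_fun setT (fun x => l (f x) y)) ->
  (forall y, mu.-integrable setT (fun x => (l (f x) y * pp x)%:E)) ->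
  (forall y, mu.-integrable setT (fun x => (l (f x) y * pm x)%:E)) ->
  risk mu pip pp pm l f = risk_PC mu pip pp pm l f.
Proof.
move=> /andP[p0 p1] _ _ _ _ ip im.
rewrite /risk /risk_PC /expect /ptilde_plus /ptilde_minus.
set a := pip.
set D1 := ((1 - a) ^+ 2 + a).
set D2 := (a ^+ 2 + (1 - a)).
have E1 : (\int[mu]_x ((l (f x) true - a * l (f x) false) *
      (a / D1 * pp x + (1 - a) ^+ 2 / D1 * pm x))%:E = \int[mu]_x (
   (a / D1) * (l (f x) true * pp x) + ((1 - a) ^+ 2 / D1) * (l (f x) true * pm x)
   + (- a * (a / D1)) * (l (f x) false * pp x)
   + (- a * ((1 - a) ^+ 2 / D1)) * (l (f x) false * pm x))%:E)%E.
  by apply: eq_integral => x _; congr EFin; ring.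
have E2 : (\int[mu]_x ((l (f x) false - (1 - a) * l (f x) true) *
      (a ^+ 2 / D2 * pp x + (1 - a) / D2 * pm x))%:E = \int[mu]_x (
   (a ^+ 2 / D2) * (l (f x) false * pp x) + ((1 - a) / D2) * (l (f x) false * pm x)
   + (- (1 - a) * (a ^+ 2 / D2)) * (l (f x) true * pp x)
   + (- (1 - a) * ((1 - a) / D2)) * (l (f x) true * pm x))%:E)%E.
  by apply: eq_integral => x _; congr EFin; ring.
rewrite E1 E2.
rewrite !lin4 //.
rewrite -(fineK (integrable_fin_num measurableT (ip true))).
rewrite -(fineK (integrable_fin_num measurableT (ip false))).
rewrite -(fineK (integrable_fin_num measurableT (im true))).
rewrite -(fineK (integrable_fin_num measurableT (im false))).
rewrite -!EFinM -!EFinD; congr EFin.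
have hD1 : D1 != 0 by rewrite /D1 lt0r_neq0 //; nra.
have hD2 : D2 != 0 by rewrite /D2 lt0r_neq0 //; nra.
have e : D2 = D1 by rewrite /D1 /D2; ring.
rewrite e.
move: (fine _) (fine _) (fine _) (fine _) => A B C E.
rewrite /D1 in hD1 *; clear e E1 E2 D2 hD2 D1.
by field.
Qed.
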